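(* Let $\Sigma$ be an alphabet, $L$ a finite language and $L'$ a regular language over $\Sigma$. Then (a) $\mathrm{rpn}(L) \geq \mathrm{rpn}(\overline{L})$ and $\mathrm{rpn}(L') \geq \mathrm{rpn}(\underline{L'})$; (b) for every weighting $\mu : \Sigma \to \mathbb{R}_{\geq 0}$, $\mathrm{rpn}(L)\geq \mathrm{rpn}(\overline{L}^{\mu})$ and $\mathrm{rpn}(L')\geq \mathrm{rpn}(\underline{L'}_{\mu})$.
   Context: Regular expressions are built from $\epsilon$ and letters by union, concatenation and star (no $\emptyset$); $\mathrm{rpn}(L)$ is the minimum number of syntax-tree nodes of an expression describing $L$. The lower envelope $\underline{L'}$ is the set of words of minimal length in $L'$; for finite $L$ the higher envelope $\overline{L}$ is the set of words of maximal length in $L$. For a weighting $\mu$, the weight of $w=w_1\cdots w_n$ is $\mu(w)=\sum_i\mu(w_i)$; $\underline{L'}_{\mu}$ is the set of words of minimal weight in $L'$ and, for finite $L$, $\overline{L}^{\mu}$ is the set of words of maximal weight in $L$. Languages are assumed nonempty and different from $\{\epsilon\}$. *)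

(* Defs.v *)
From mathcomp Require Import all_boot.
From Stdlib Require Import Reals ClassicalEpsilon.
Set Implicit Arguments. Unset Strict Implicit. Unset Printing Implicit Defensive.

Section Regex.
Variable Sigma : finType.

Definition word := seq Sigma.
Definition language := word -> Prop.
Definition lang_eq (L1 L2 : language) : Prop := forall w, L1 w <-> L2 w.

(* Regular expressions without the empty set *)
Inductive regex : Type :=
| REps : regex
| RSym : Sigma -> regex
| RPlus : regex -> regex -> regex
| RCat : regex -> regex -> regex
| RStar : regex -> regex.

Fixpoint rsize (r : regex) : nat :=
  match r with
  | REps => 1
  | RSym _ => 1
  | RPlus r1 r2 => (rsize r1 + rsize r2).+1
  | RCat r1 r2 => (rsize r1 + rsize r2).+1
  | RStar r1 => (rsize r1).+1
  end.

Inductive matches : regex -> language :=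
| MEps : matches REps [::]
| MSym a : matches (RSym a) [:: a]
| MPlusL r s w : matches r w -> matches (RPlus r s) w
| MPlusR r s w : matches s w -> matches (RPlus r s) w
| MCat r s u v : matches r u -> matches s v -> matches (RCat r s) (u ++ v)
| MStar0 r : matches (RStar r) [::]
| MStarS r u v : matches r u -> matches (RStar r) v -> matches (RStar r) (u ++ v).

Definition regular (L : language) : Prop := exists r, lang_eq (matches r) L.
Definition finite_lang (L : language) : Prop := exists s : seq word, forall w, L w <-> w \in s.
Definition nonempty_lang (L : language) : Prop := exists w, L w.
Definition eps_lang : language := fun w => w = [::].

(* rpn L = minimum size of an expression describing L (0 if none exists) *)
Definition rpn_at (L : language) (n : nat) : bool :=
  if excluded_middle_informative (exists r, lang_eq (matches r) L /\ rsize r = n)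
  then true else false.

Definition rpn (L : language) : nat :=
  match excluded_middle_informative (exists n, rpn_at L n) with
  | left H => @ex_minn (rpn_at L) H
  | right _ => 0
  end.

Definition higher_env (L : language) : language :=
  fun w => L w /\ forall v, L v -> size v <= size w.
Definition lower_env (L : language) : language :=
  fun w => L w /\ forall v, L v -> size w <= size v.

Definition weight (mu : Sigma -> R) (w : word) : R :=
  foldr (fun a acc => (mu a + acc)%R) 0%R w.
Definition higher_env_w (mu : Sigma -> R) (L : language) : language :=
  fun w => L w /\ forall v, L v -> (weight mu v <= weight mu w)%R.
Definition lower_env_w (mu : Sigma -> R) (L : language) : language :=
  fun w => L w /\ forall v, L v -> (weight mu w <= weight mu v)%R.

End Regex.

(* Main.v *)
Require Import Defs.
From mathcomp Require Import all_boot.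
From Stdlib Require Import Reals.
From Stdlib Require Import Lra Lia ClassicalEpsilon.
From mathcomp Require Import zify.

Set Implicit Arguments. Unset Strict Implicit. Unset Printing Implicit Defensive.

Section Aux.
Variable Sigma : finType.
Implicit Types (r : regex Sigma) (w u v : word Sigma) (L : language Sigma).

Lemma m_eps w : matches (REps Sigma) w <-> w = [::].
Proof. split; [by intros H; inversion H | by move->; constructor]. Qed.

Lemma m_sym a w : matches (RSym a) w <-> w = [:: a].
Proof. split; [by intros H; inversion H | by move->; constructor]. Qed.

Lemma m_plus r s w : matches (RPlus r s) w <-> matches r w \/ matches s w.
Proof.
split; [intros H; inversion H; auto | by case; [apply MPlusL|apply MPlusR]].
Qed.

Lemma m_cat r s w : matches (RCat r s) w <->
  exists u v, w = u ++ v /\ matches r u /\ matches s v.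
Proof.
split; [intros H; inversion H; subst; eauto 6 |].
by move=> [u [v [-> [H1 H2]]]]; constructor.
Qed.

Lemma m_star_inv r w : matches (RStar r) w ->
  w = [::] \/ exists u v, w = u ++ v /\ matches r u /\ matches (RStar r) v.
Proof. intros H; inversion H; subst; eauto 6. Qed.

Lemma star_ind r (P : word Sigma -> Prop) :
  P [::] -> (forall u v, matches r u -> matches (RStar r) v -> P v -> P (u ++ v)) ->
  forall w, matches (RStar r) w -> P w.
Proof.
move=> H0 HS w H.
remember (RStar r) as t eqn:Et.
induction H; try discriminate; inversion Et; subst; auto.
Qed.

Lemma matches_ne r : exists w, matches r w.
Proof.
elim: r => [|a|r1 [w1 H1] r2 _|r1 [w1 H1] r2 [w2 H2]|r1 _].
- exists [::]; constructor.
- exists [:: a]; constructor.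
- exists w1; by constructor.
- exists (w1 ++ w2); by constructor.
- exists [::]; constructor.
Qed.

Section W.
Variable mu : Sigma -> R.
Hypothesis mu0 : forall a, (0 <= mu a)%R.

Lemma weight_cat u v : weight mu (u ++ v) = (weight mu u + weight mu v)%R.
Proof. elim: u => [|a u IH] /=; [ring | rewrite IH; ring]. Qed.

Lemma weight_ge0 w : (0 <= weight mu w)%R.
Proof. elim: w => [|a w IH] /=; [lra | have := mu0 a; lra]. Qed.

Definition bounded L := exists N, forall w, L w -> size w <= N.

Fixpoint minw r : R :=
  match r with
  | REps => 0%R | RSym a => mu a
  | RPlus r1 r2 => Rmin (minw r1) (minw r2)
  | RCat r1 r2 => (minw r1 + minw r2)%R
  | RStar _ => 0%R end.

Fixpoint low r : regex Sigma :=
  match r with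
  | RPlus r1 r2 =>
      match total_order_T (minw r1) (minw r2) with
      | inleft (left _) => low r1
      | inleft (right _) => RPlus (low r1) (low r2)
      | inright _ => low r2 end
  | RCat r1 r2 => RCat (low r1) (low r2)
  | RStar r1 => if Rlt_dec 0 (minw r1) then REps Sigma else RStar (low r1)
  | r => r end.

Fixpoint maxw r : R :=
  match r with
  | REps => 0%R | RSym a => mu a
  | RPlus r1 r2 => Rmax (maxw r1) (maxw r2)
  | RCat r1 r2 => (maxw r1 + maxw r2)%R
  | RStar _ => 0%R end.

Fixpoint high r : regex Sigma :=
  match r with
  | RPlus r1 r2 =>
      match total_order_T (maxw r1) (maxw r2) with
      | inleft (left _) => high r2
      | inleft (right _) => RPlus (high r1) (high r2)
      | inright _ => high r1 end
  | RCat r1 r2 => RCat (high r1) (high r2)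
  | r => r end.

Lemma low_spec r :
  (forall w, matches r w -> (minw r <= weight mu w)%R) /\
  (exists w, matches r w /\ weight mu w = minw r) /\
  (forall w, matches (low r) w <-> matches r w /\ weight mu w = minw r) /\
  rsize (low r) <= rsize r.
Proof.
elim: r => [|a|r1 [B1 [[x1 [X1 E1]] [C1 S1]]] r2 [B2 [[x2 [X2 E2]] [C2 S2]]]
            |r1 [B1 [[x1 [X1 E1]] [C1 S1]]] r2 [B2 [[x2 [X2 E2]] [C2 S2]]]
            |r1 [B1 [[x1 [X1 E1]] [C1 S1]]]].
- split; [by move=> w /m_eps ->; simpl; lra|].
  split; [exists [::]; split; [constructor|done]|].
  split=> //= w; rewrite m_eps; split; [move=> ->; done| by case].
- split; [by move=> w /m_sym ->; simpl; lra|].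
  split; [exists [:: a]; split; [constructor|simpl; ring]|].
  split=> //= w; rewrite m_sym; split; [move=> ->; simpl; split=>//; ring| by case].
- have Hb : forall w, matches (RPlus r1 r2) w -> (minw (RPlus r1 r2) <= weight mu w)%R.
    move=> w /m_plus [H|H] /=; [have := B1 _ H | have := B2 _ H];
    have := Rmin_l (minw r1) (minw r2); have := Rmin_r (minw r1) (minw r2); lra.
  split=> //=.
  case: (total_order_T (minw r1) (minw r2)) => [[h|h]|h].
  + rewrite Rmin_left; last lra.
    split; [exists x1; split=>//; apply/m_plus; auto|].
    split; last lia.
    move=> w; rewrite C1 m_plus; split; [case=> H ->; auto|].
    case=> [[H|H] E]; split=>//. have := B2 _ H; lra.
  + rewrite Rmin_left; last lra.
    split; [exists x1; split=>//; apply/m_plus; auto|].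
    split; last (simpl; lia).
    move=> w; rewrite !m_plus C1 C2; split.
    * case=> [[H ->]|[H ->]]; auto.
    * case=> [[H|H] E]; [left|right]; split=>//; lra.
  + rewrite Rmin_right; last lra.
    split; [exists x2; split=>//; apply/m_plus; auto|].
    split; last lia.
    move=> w; rewrite C2 m_plus; split; [case=> H ->; auto|].
    case=> [[H|H] E]; split=>//. have := B1 _ H; lra.
- split.
    move=> w /m_cat [u [v [-> [Hu Hv]]]] /=; rewrite weight_cat.
    have := B1 _ Hu; have := B2 _ Hv; lra.
  split; [exists (x1 ++ x2); split; [by constructor| rewrite weight_cat /=; lra]|].
  split; last (simpl; lia).
  move=> w /=; rewrite !m_cat; split.
  + move=> [u [v [-> [Hu Hv]]]]; move: Hu Hv; rewrite C1 C2 => -[Hu Eu] [Hv Ev].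
    split; [by exists u, v|]. rewrite weight_cat; lra.
  + move=> [[u [v [-> [Hu Hv]]]] E]; exists u, v; split=>//.
    rewrite weight_cat in E. have := B1 _ Hu; have := B2 _ Hv => h2 h1.
    rewrite C1 C2; split; split=>//; lra.
- split; [by move=> w _ /=; apply: weight_ge0|].
  split; [exists [::]; split; [constructor|done]|].
  simpl; case: (Rlt_dec 0 (minw r1)) => h.
  + split; last (simpl; lia).
    move=> w; rewrite m_eps; split; [move=>->; split; [constructor|done]|].
    move=> [H]; move: H; apply: (star_ind (P := fun w => weight mu w = 0%R -> w = [::])) => //.
    move=> u v Hu _ _; rewrite weight_cat => E.
    have := B1 _ Hu; have := weight_ge0 v; lra.
  + have m0 : minw r1 = 0%R.
      have := weight_ge0 x1; lra.
    split; last (simpl; lia).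
    move=> w; split.
    * apply: (star_ind (P := fun w => matches (RStar r1) w /\ weight mu w = 0%R)).
        split; [constructor|done].
      move=> u v /C1 [Hu Eu] _ [Hv Ev]; split; [by constructor|].
      rewrite weight_cat; lra.
    * move=> [H]; move: H.
      apply: (star_ind (P := fun w => weight mu w = 0%R -> matches (RStar (low r1)) w)).
        move=> _; constructor.
      move=> u v Hu _ IH; rewrite weight_cat => E.
      have := weight_ge0 u; have := weight_ge0 v => g1 g2.
      constructor; [apply/C1; split=>//; lra | apply: IH; lra].
Qed.

Lemma star_pow r u k : matches r u -> matches (RStar r) (flatten (nseq k u)).
Proof.
move=> H; elim: k => [|k IH] /=; [constructor | by constructor].
Qed.

Lemma size_pow u k : size (flatten (nseq k u)) = k * size u.
Proof. elim: k => [|k IH] //=; rewrite size_cat IH mulSn. done. Qed.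

Lemma high_spec r : bounded (matches r) ->
  (forall w, matches r w -> (weight mu w <= maxw r)%R) /\
  (exists w, matches r w /\ weight mu w = maxw r) /\
  (forall w, matches (high r) w <-> matches r w /\ weight mu w = maxw r) /\
  rsize (high r) <= rsize r.
Proof.
elim: r => [|a|r1 IH1 r2 IH2|r1 IH1 r2 IH2|r1 _] Hbd.
- split; [by move=> w /m_eps ->; simpl; lra|].
  split; [exists [::]; split; [constructor|done]|].
  split=> //= w; rewrite m_eps; split; [move=> ->; done| by case].
- split; [by move=> w /m_sym ->; simpl; lra|].
  split; [exists [:: a]; split; [constructor|simpl; ring]|].
  split=> //= w; rewrite m_sym; split; [move=> ->; simpl; split=>//; ring| by case].
- case: Hbd => N HN.
  have [B1 [[x1 [X1 E1]] [C1 S1]]] : _ := IH1 (ex_intro _ N (fun w h => HN w (MPlusL _ h))).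
  have [B2 [[x2 [X2 E2]] [C2 S2]]] : _ := IH2 (ex_intro _ N (fun w h => HN w (MPlusR _ h))).
  have Hb : forall w, matches (RPlus r1 r2) w -> (weight mu w <= maxw (RPlus r1 r2))%R.
    move=> w /m_plus [H|H] /=; [have := B1 _ H | have := B2 _ H];
    have := Rmax_l (maxw r1) (maxw r2); have := Rmax_r (maxw r1) (maxw r2); lra.
  split=> //=.
  case: (total_order_T (maxw r1) (maxw r2)) => [[h|h]|h].
  + rewrite Rmax_right; last lra.
    split; [exists x2; split=>//; apply/m_plus; auto|].
    split; last lia.
    move=> w; rewrite C2 m_plus; split; [case=> H ->; auto|].
    case=> [[H|H] E]; split=>//. have := B1 _ H; lra.
  + rewrite Rmax_left; last lra.
    split; [exists x1; split=>//; apply/m_plus; auto|].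
    split; last (simpl; lia).
    move=> w; rewrite !m_plus C1 C2; split.
    * case=> [[H ->]|[H ->]]; auto.
    * case=> [[H|H] E]; [left|right]; split=>//; lra.
  + rewrite Rmax_left; last lra.
    split; [exists x1; split=>//; apply/m_plus; auto|].
    split; last lia.
    move=> w; rewrite C1 m_plus; split; [case=> H ->; auto|].
    case=> [[H|H] E]; split=>//. have := B2 _ H; lra.
- case: Hbd => N HN.
  have [y1 Y1] := matches_ne r1. have [y2 Y2] := matches_ne r2.
  have [B1 [[x1 [X1 E1]] [C1 S1]]] : _ := IH1 (ex_intro _ N
     (fun w h => leq_trans (leq_trans (leq_addr (size y2) _) (eq_leq (esym (size_cat w y2))))
                  (HN _ (MCat h Y2)))).
  have [B2 [[x2 [X2 E2]] [C2 S2]]] : _ := IH2 (ex_intro _ N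
     (fun w h => leq_trans (leq_trans (leq_addl (size y1) _) (eq_leq (esym (size_cat y1 w))))
                  (HN _ (MCat Y1 h)))).
  split.
    move=> w /m_cat [u [v [-> [Hu Hv]]]] /=; rewrite weight_cat.
    have := B1 _ Hu; have := B2 _ Hv; lra.
  split; [exists (x1 ++ x2); split; [by constructor| rewrite weight_cat /=; lra]|].
  split; last (simpl; lia).
  move=> w /=; rewrite !m_cat; split.
  + move=> [u [v [-> [Hu Hv]]]]; move: Hu Hv; rewrite C1 C2 => -[Hu Eu] [Hv Ev].
    split; [by exists u, v|]. rewrite weight_cat; lra.
  + move=> [[u [v [-> [Hu Hv]]]] E]; exists u, v; split=>//.
    rewrite weight_cat in E. have := B1 _ Hu; have := B2 _ Hv => h2 h1.
    rewrite C1 C2; split; split=>//; lra.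
- case: Hbd => N HN.
  have r1eps : forall u, matches r1 u -> u = [::].
    move=> u Hu; case: u Hu => [//|a u] Hu.
    have := HN _ (star_pow N.+1 Hu); rewrite size_pow /=; lia.
  have st : forall w, matches (RStar r1) w -> w = [::].
    apply: star_ind => // u v /r1eps -> _ -> //.
  split; [by move=> w /st -> /=; lra|].
  split; [exists [::]; split; [constructor|done]|].
  split=> //= w; split; [move=> H; split=>//; rewrite (st _ H) //|by case].
Qed.

End W.

Lemma rpn_spec L : regular L ->
  (exists r, lang_eq (matches r) L /\ rsize r = rpn L) /\
  forall r, lang_eq (matches r) L -> rpn L <= rsize r.
Proof.
move=> [r0 H0].
have At : forall r, lang_eq (matches r) L -> rpn_at L (rsize r).
  move=> r Hr; rewrite /rpn_at; case: excluded_middle_informative => // [[]].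
  by exists r.
rewrite /rpn; case: excluded_middle_informative => [H|[]]; last first.
  by exists (rsize r0); apply: At.
case: ex_minnP => m Hm Hmin; split.
- move: Hm; rewrite /rpn_at; case: excluded_middle_informative => [[r [Hr Hs]] _|//].
  by exists r.
- by move=> r Hr; apply: Hmin; apply: At.
Qed.

Lemma rpn_mono L L2 (f : regex Sigma -> regex Sigma) : regular L ->
  (forall r, lang_eq (matches r) L -> lang_eq (matches (f r)) L2 /\ rsize (f r) <= rsize r) ->
  regular L2 /\ rpn L2 <= rpn L.
Proof.
move=> HL Hf; have [[r0 [H0 S0]] _] := rpn_spec HL.
have [E1 S1] := Hf _ H0.
have R2 : regular L2 by exists (f r0).
split=>//. have [_ M] := rpn_spec R2. have := M _ E1. lia.
Qed.


Definition wre w : regex Sigma := foldr (fun a r => RCat (RSym a) r) (REps Sigma) w.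

Lemma wre_spec w v : matches (wre w) v <-> v = w.
Proof.
elim: w v => [|a w IH] v /=; first exact: m_eps.
rewrite m_cat; split.
- by move=> [u [v' [-> [/m_sym -> /IH ->]]]].
- move=> ->; exists [:: a], w; split=>//; split; [exact/m_sym|exact/IH].
Qed.

Definition sre x (s : seq (word Sigma)) := foldr (fun w r => RPlus (wre w) r) (wre x) s.

Lemma sre_spec x s v : matches (sre x s) v <-> v = x \/ v \in s.
Proof.
elim: s => [|y s IH] /=; first by rewrite wre_spec; split; auto; case.
rewrite m_plus wre_spec IH in_cons; split.
- case=> [->|[->|H]]; [by right; rewrite eqxx | by left | by right; rewrite H orbT].
- case=> [->|/orP [/eqP ->|H]]; auto.
Qed.

Lemma size_in v (s : seq (word Sigma)) : v \in s -> size v <= sumn (map size s).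
Proof.
elim: s => [//|y s IH] /=; rewrite in_cons => /orP [/eqP ->|/IH]; lia.
Qed.

Lemma finite_regular L : finite_lang L -> nonempty_lang L -> regular L /\ bounded L.
Proof.
move=> [s Hs] [w0 H0]; split.
- exists (sre w0 s) => v; rewrite sre_spec Hs; split; [case=> // ->; exact/Hs | auto].
- exists (sumn (map size s)) => v /Hs; exact: size_in.
Qed.

Lemma hchar mu L r : bounded L -> lang_eq (matches r) L ->
  lang_eq (matches (high mu r)) (higher_env_w mu L) /\ rsize (high mu r) <= rsize r.
Proof.
move=> [N HN] E.
have Hb : bounded (matches r) by exists N => w /E /HN.
have [B [[x [X Ex]] [C S]]] := high_spec mu Hb.
split=>// w; rewrite C /higher_env_w; split.
- move=> [Hw Ew]; split; [exact/E|]. move=> v /E Hv; rewrite Ew; exact: B.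
- move=> [/E Hw Hall]; split=>//. have := Hall x (proj1 (E x) X); have := B _ Hw; lra.
Qed.

Lemma lchar mu (mu0 : forall a, (0 <= mu a)%R) L r : lang_eq (matches r) L ->
  lang_eq (matches (low mu r)) (lower_env_w mu L) /\ rsize (low mu r) <= rsize r.
Proof.
move=> E.
have [B [[x [X Ex]] [C S]]] := low_spec mu0 r.
split=>// w; rewrite C /lower_env_w; split.
- move=> [Hw Ew]; split; [exact/E|]. move=> v /E Hv; rewrite Ew; exact: B.
- move=> [/E Hw Hall]; split=>//. have := Hall x (proj1 (E x) X); have := B _ Hw; lra.
Qed.

Definition one : Sigma -> R := fun _ => 1%R.

Lemma weight_one w : weight one w = INR (size w).
Proof. elim: w => [|a w IH] //=; rewrite IH /one. case: (size w) => [|n] /=; ring. Qed.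

Lemma le_nat_R m n : m <= n <-> (INR m <= INR n)%R.
Proof. split=> H. apply: le_INR; exact/ssrnat.leP. apply/ssrnat.leP; exact: INR_le. Qed.

Lemma len_high L : lang_eq (higher_env_w one L) (higher_env L).
Proof.
move=> w; rewrite /higher_env_w /higher_env; split=> -[H1 H2]; split=>// v Hv.
- apply/le_nat_R; rewrite -!weight_one; exact: H2.
- rewrite !weight_one; apply/le_nat_R; exact: H2.
Qed.

Lemma len_low L : lang_eq (lower_env_w one L) (lower_env L).
Proof.
move=> w; rewrite /lower_env_w /lower_env; split=> -[H1 H2]; split=>// v Hv.
- apply/le_nat_R; rewrite -!weight_one; exact: H2.
- rewrite !weight_one; apply/le_nat_R; exact: H2.
Qed.

Lemma lang_eq_trans L1 L2 L3 : lang_eq L1 L2 -> lang_eq L2 L3 -> lang_eq L1 L3.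
Proof. move=> A B w; rewrite A B; done. Qed.

End Aux.

Theorem lemma8p1 (Sigma : finType) (L L' : language Sigma) :
  finite_lang L -> nonempty_lang L -> ~ lang_eq L (@eps_lang Sigma) ->
  regular L' -> nonempty_lang L' -> ~ lang_eq L' (@eps_lang Sigma) ->
  (* (a) *)
  ((regular (higher_env L) /\ rpn L >= rpn (higher_env L)) /\
   (regular (lower_env L') /\ rpn L' >= rpn (lower_env L'))) /\
  (* (b) *)
  (forall mu : Sigma -> R, (forall a, (0 <= mu a)%R) ->
     (regular (higher_env_w mu L) /\ rpn L >= rpn (higher_env_w mu L)) /\
     (regular (lower_env_w mu L') /\ rpn L' >= rpn (lower_env_w mu L'))).
Proof.
move=> HF HN _ HR' _ _.
have [HR HB] := finite_regular HF HN.
have one0 : forall a : Sigma, (0 <= @one _ a)%R by move=> a; rewrite /one; lra.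
split; [split|move=> mu mu0; split].
- apply: (rpn_mono (f := high (@one _))) => // r E.
  have [E1 S1] := hchar (@one _) HB E; split=>//; exact: lang_eq_trans E1 (len_high L).
- apply: (rpn_mono (f := low (@one _))) => // r E.
  have [E1 S1] := lchar one0 E; split=>//; exact: lang_eq_trans E1 (len_low L').
- apply: (rpn_mono (f := high mu)) => // r E; exact: hchar.
- apply: (rpn_mono (f := low mu)) => // r E; exact: lchar.
Qed.
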